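(* Let $n\ge 2$, and let $L=(\ell_1,\dots,\ell_n)\in\mathbb{Z}^n$ and $K=(k_1,\dots,k_n)\in\mathbb{Z}^n$ with $0<k_i<\ell_i$ for each $1\le i\le n$. Let $\tau=\prod_{i=1}^n\ell_i$, $\kappa=\prod_{i=1}^n k_i$, $G=\mathbb{Z}_{\tau-\kappa}$, and assume that $k_i$ is invertible in the ring $G$ for each $2\le i\le n$. Define $\beta_1=1$ and $\beta_{i+1}=k_{i+1}^{-1}\ell_i\beta_i$ for $1\le i\le n-1$ (computed in $G$). Then $\mathcal{S}_{L,K}$ splits $G$ with the splitting sequence $\beta=\beta_1,\dots,\beta_n$.
   Context: For integer vectors $L,K$ with $0<k_i<\ell_i$, the discrete $n$-dimensional chair is $\mathcal{S}_{L,K}=\{(x_1,\dots,x_n)\in\mathbb{Z}^n: 0\le x_i<\ell_i \text{ for all } i, \text{ and there exists } j \text{ with } x_j<\ell_j-k_j\}$; it has $\prod\ell_i-\prod k_i$ elements. $\mathbb{Z}_m$ denotes the ring of integers modulo $m$. For an Abelian group $G$, a sequence $\beta=\beta_1,\dots,\beta_n$ of elements of $G$, and $X=(x_1,\dots,x_n)\in\mathbb{Z}^n$, set $X\cdot\beta=\sum_{i=1}^n x_i\beta_i\in G$. A finite set $\mathcal{S}\subset\mathbb{Z}^n$ splits $G$ with splitting sequence $\beta$ if the set $\{\mathcal{E}\cdot\beta:\mathcal{E}\in\mathcal{S}\}$ consists of $|\mathcal{S}|$ distinct elements of $G$. *)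

(* Defs.v *)
From mathcomp Require Import all_boot all_order all_algebra.
Set Implicit Arguments. Unset Strict Implicit. Unset Printing Implicit Defensive.
Import GRing.Theory Num.Theory.
Local Open Scope ring_scope.

(* Points of Z^n are finite functions 'I_n -> int (index i-1 for coordinate i). *)

Definition in_chair (n : nat) (L K : nat -> int) (X : {ffun 'I_n -> int}) : Prop :=
  (forall i : 'I_n, 0 <= X i < L i) /\ (exists j : 'I_n, X j < L j - K j).

Definition dotg (G : zmodType) (n : nat) (X : {ffun 'I_n -> int}) (beta : 'I_n -> G) : G :=
  \sum_(i < n) beta i *~ X i.

Definition splits (G : zmodType) (n : nat) (S : {ffun 'I_n -> int} -> Prop)
    (beta : 'I_n -> G) : Prop :=
  forall X Y, S X -> S Y -> dotg X beta = dotg Y beta -> X = Y.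

(* beta_1 = 1, beta_{i+1} = k_{i+1}^{-1} l_i beta_i, in 0-based nat indexing:
   betaseq 0 = 1, betaseq (i+1) = (k (i+1))^{-1} * l i * betaseq i. *)
Fixpoint betaseq (R : unitRingType) (l k : nat -> R) (i : nat) : R :=
  match i with
  | 0 => 1
  | i'.+1 => (k i)^-1 * l i' * betaseq l k i'
  end.

(* Main.v *)
Require Import Defs.
From mathcomp Require Import all_boot all_order all_algebra.
From mathcomp Require Import zify ring lra.
Import Order.TTheory GRing.Theory Num.Theory.
Local Open Scope ring_scope.
Set Implicit Arguments.
Unset Strict Implicit.
Lemma chairL1 (n : nat) (l k x y e : nat -> int) :
  (forall j, (j < n)%N -> 0 < k j < l j) ->
  (forall j, (j < n)%N -> 0 <= x j < l j) ->
  (forall j, (j < n)%N -> 0 <= y j < l j) ->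
  (exists2 j, (j < n)%N & x j < l j - k j) ->
  e 0%N = e n ->
  (forall j, (j < n)%N -> x j - y j = e j.+1 * l j - e j * k j) ->
  forall j, (j <= n)%N -> e j <= 0.
Proof.
move=> hk hx hy [j0 hj0 hxj0] e0n hd.
have step : forall j, (j < n)%N -> 1 <= e j.+1 -> 1 <= e j /\ e j.+1 <= e j.
  move=> j jn h1.
  have /andP[k0 kl] := hk j jn; have /andP[y0 yl] := hy j jn.
  have /andP[x0 xl] := hx j jn; have dj := hd j jn.
  suff h : e j.+1 <= e j by split=> //; lia.
  rewrite leNgt; apply/negP => lt.
  have p1 : 0 <= (e j.+1 - 1 - e j) * k j by apply: mulr_ge0; lia.
  have p2 : 0 <= (e j.+1 - 1) * (l j - k j) by apply: mulr_ge0; lia.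
  nia.
have down : forall j, (j <= n)%N -> 1 <= e j -> forall i, (i <= j)%N -> 1 <= e i /\ e j <= e i.
  elim=> [|j IH] hjn hej i hij.
    by move: hij; rewrite leqn0 => /eqP ->; split.
  case: (ltngtP i j.+1) hij => // [hi|->] _; last by split.
  have [h1 h2] := step j hjn hej.
  have [h3 h4] := IH (ltnW hjn) h1 i hi.
  split=> //; lia.
have e0 : e 0%N <= 0.
  rewrite leNgt; apply/negP => h0.
  have h0' : 1 <= e 0%N by lia.
  have all : forall i, (i <= n)%N -> e i = e 0%N.
    move=> i hi.
    have [_ a] := down n (leqnn n) (ltac:(rewrite -e0n; exact h0')) i hi.
    have [_ b] := down i hi (proj1 (down n (leqnn n) (ltac:(rewrite -e0n; exact h0')) i hi)) 0%N (leq0n i).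
    lia.
  have := hd j0 hj0; rewrite (all j0.+1 hj0) (all j0 (ltnW hj0)) => dj.
  have /andP[k0 kl] := hk j0 hj0; have /andP[y0 yl] := hy j0 hj0.
  have p : 0 <= (e 0%N - 1) * (l j0 - k j0) by apply: mulr_ge0; lia.
  nia.
move=> j hj; rewrite leNgt; apply/negP => h.
have [a _] := down j hj (ltac:(lia)) 0%N (leq0n j).
lia.
Qed.

Definition Lp (l : nat -> int) (j : nat) := \prod_(0 <= i < j) l i.
Definition Ks (k : nat -> int) (n j : nat) := \prod_(j <= i < n) k i.

Lemma prod_gt0_nat a b (f : nat -> int) :
  (forall i, (a <= i < b)%N -> 0 < f i) -> 0 < \prod_(a <= i < b) f i.
Proof. by move=> h; rewrite big_nat_cond; apply: prodr_gt0 => i /andP[hi _]; apply: h. Qed.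

Lemma chairL2 (n : nat) (l k d : nat -> int) (t : int) :
  (forall j, (j < n)%N -> 0 < k j < l j) ->
  (forall j, (0 < j < n)%N -> coprimez (Lp l n - Ks k n 0) (k j)) ->
  \sum_(0 <= j < n) d j * (Lp l j * Ks k n j.+1) = t * (Lp l n - Ks k n 0) ->
  exists e : nat -> int, e 0%N = e n /\
    forall j, (j < n)%N -> d j = e j.+1 * l j - e j * k j.
Proof.
move=> hk hcop hsum.
set tau := Lp l n in hcop hsum *; set kap := Ks k n 0 in hcop hsum *.
pose Q j := \sum_(0 <= i < j) d i * (Lp l i * Ks k n i.+1).
have hQn : Q n = t * (tau - kap) by exact: hsum.
have Lpgt0 : forall j, (j <= n)%N -> 0 < Lp l j.
  move=> j hj; apply: prod_gt0_nat => i /andP[_ hi].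
  by have /andP[h1 h2] := hk i (leq_trans hi hj); apply: lt_trans h2.
have Ksgt0 : forall j, 0 < Ks k n j.
  by move=> j; apply: prod_gt0_nat => i /andP[_ hi]; have /andP[] := hk i hi.
have Lpdvd : forall j j', (j <= j')%N -> (Lp l j %| Lp l j')%Z.
  by move=> j j' h; rewrite /Lp (big_cat_nat (leq0n j) h) /=; apply: dvdz_mulr; apply: dvdzz.
have Ksdvd : forall j j', (j <= j')%N -> (j' <= n)%N -> (Ks k n j' %| Ks k n j)%Z.
  by move=> j j' h h'; rewrite /Ks (big_cat_nat h h') /=; apply: dvdz_mull; apply: dvdzz.
have cop : forall j, (j <= n)%N -> coprimez (Lp l j) (Ks k n j).
  case=> [|j] hj.
    by rewrite /Lp big_geq // /coprimez gcdzC gcdz1.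
  have cm : coprimez (tau - kap) (Ks k n j.+1).
    rewrite /Ks big_nat_cond; apply: (big_rec (fun x => coprimez (tau - kap) x)) => [|i x /andP[/andP[hji hin] _] hx].
      by rewrite /coprimez gcdz1.
    rewrite coprimezMr hx andbT; apply: hcop; rewrite hin andbT.
    exact: leq_trans _ hji.
  have g1 : (gcdz (Lp l j.+1) (Ks k n j.+1) %| tau - kap)%Z.
    apply: rpredB.
      exact: dvdz_trans (dvdz_gcdl _ _) (Lpdvd _ _ hj).
    exact: dvdz_trans (dvdz_gcdr _ _) (Ksdvd 0%N j.+1 (leq0n _) hj).
  have g2 : (gcdz (Lp l j.+1) (Ks k n j.+1) %| gcdz (tau - kap) (Ks k n j.+1))%Z.
    by rewrite dvdz_gcd g1 dvdz_gcdr.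
  by move: g2; rewrite (eqP cm) dvdzE /= dvdn1 => /eqP h; rewrite /coprimez /gcdz h.
have dv : forall j, (j <= n)%N -> (Lp l j * Ks k n j %| Q j + t * kap)%Z.
  move=> j hj; rewrite Gauss_dvdz ?cop //; apply/andP; split.
    have hs : Q n = Q j + \sum_(j <= i < n) d i * (Lp l i * Ks k n i.+1).
      by rewrite /Q (big_cat_nat (leq0n j) hj).
    have -> : Q j + t * kap = t * tau - \sum_(j <= i < n) d i * (Lp l i * Ks k n i.+1).
      by move: hs; rewrite hQn; lia.
    apply: rpredB.
      by apply: dvdz_mull; apply: Lpdvd.
    rewrite big_nat_cond; apply: rpred_sum => i /andP[/andP[hji _] _].
    by apply: dvdz_mull; apply: dvdz_mulr; apply: Lpdvd.
  apply: rpredD.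
    rewrite /Q big_nat_cond; apply: rpred_sum => i /andP[/andP[_ hij] _].
    by apply: dvdz_mull; apply: dvdz_mull; apply: Ksdvd hij hj.
  by apply: dvdz_mull; apply: Ksdvd (leq0n j) hj.
pose e j := ((Q j + t * kap) %/ (Lp l j * Ks k n j))%Z.
have eE : forall j, (j <= n)%N -> e j * (Lp l j * Ks k n j) = Q j + t * kap.
  by move=> j hj; rewrite /e divzK // dv.
exists e; split.
  have -> : e 0%N = t.
    rewrite /e /Q big_geq // /Lp big_geq // add0r mul1r mulzK //.
    by rewrite gt_eqF ?Ksgt0.
  rewrite /e hQn /Ks big_geq // mulr1.
  have -> : t * (tau - kap) + t * kap = t * tau by ring.
  by rewrite mulzK // gt_eqF ?Lpgt0.
move=> j hj.
have E1 := eE j.+1 hj; have E0 := eE j (ltnW hj).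
have hQ : Q j.+1 = Q j + d j * (Lp l j * Ks k n j.+1) by rewrite /Q big_nat_recr.
have hL : Lp l j.+1 = Lp l j * l j by rewrite /Lp big_nat_recr.
have hK : Ks k n j = k j * Ks k n j.+1 by rewrite /Ks big_ltn.
rewrite hL hQ in E1; rewrite hK in E0.
have A0 : Lp l j * Ks k n j.+1 != 0.
  by rewrite gt_eqF // mulr_gt0 ?Ksgt0 ?Lpgt0 // ltnW.
apply: (mulIf A0).
lia.
Qed.

Lemma diff_ge n (l k : nat -> int) :
  (forall j, (j < n)%N -> 0 < k j < l j) ->
  forall j, (j <= n)%N -> j%:Z <= Lp l j - \prod_(0 <= i < j) k i /\ 1 <= \prod_(0 <= i < j) k i.
Proof.
move=> hk; elim=> [|j IH] hj.
  by rewrite /Lp !big_geq.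
have [h1 h2] := IH (ltnW hj).
have /andP[k0 kl] := hk j hj.
rewrite /Lp !big_nat_recr //= -/(Lp l j).
set a := Lp l j in h1 *; set b := \prod_(0 <= i < j) k i in h1 h2 *.
have p1 : 0 <= (l j - k j - 1) * a by apply: mulr_ge0; lia.
have p2 : 0 <= (k j - 1) * (a - b) by apply: mulr_ge0; lia.
have p3 : 1 <= b * k j by nia.
split; nia.
Qed.

Lemma Zp_int0 (p : nat) (z : int) : (1 < p)%N -> (z%:~R : 'Z_p) = 0 -> (p%:Z %| z)%Z.
Proof.
move=> hp; case: z => a.
  rewrite -pmulrn => /(congr1 (@nat_of_ord _)); rewrite val_Zp_nat //= => h.
  by rewrite dvdzE /= /dvdn h.
rewrite NegzE mulrNz -pmulrn => /eqP; rewrite oppr_eq0 => /eqP /(congr1 (@nat_of_ord _)).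
rewrite val_Zp_nat //= => h.
by rewrite dvdzE abszN /= /dvdn h.
Qed.

Theorem mainTheorem2 (n : nat) (L K : nat -> int) :
  (2 <= n)%N ->
  (forall i, (i < n)%N -> 0 < K i < L i) ->
  let tau := \prod_(0 <= i < n) L i in
  let kappa := \prod_(0 <= i < n) K i in
  let m := `|tau - kappa|%N in
  (forall i, (1 <= i < n)%N -> ((K i)%:~R : 'Z_m) \is a GRing.unit) ->
  let beta := fun i : 'I_n =>
    betaseq (fun j => ((L j)%:~R : 'Z_m)) (fun j => ((K j)%:~R : 'Z_m)) (val i) in
  splits (@in_chair n L K) beta.
Proof.
case: n => [|n'] // hn hk tau kappa m hunit beta.
set n := n'.+1 in hn hk tau kappa m hunit beta *.
move=> X Y [hX [j0 hj0]] [hY [j1 hj1]] heq.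
pose x j := X (inord j); pose y j := Y (inord j).
have hXx : forall i : 'I_n, X i = x i by move=> i; rewrite /x inord_val.
have hYy : forall i : 'I_n, Y i = y i by move=> i; rewrite /y inord_val.
have hx : forall j, (j < n)%N -> 0 <= x j < L j.
  by move=> j hj; have := hX (inord j); rewrite /x inordK.
have hy : forall j, (j < n)%N -> 0 <= y j < L j.
  by move=> j hj; have := hY (inord j); rewrite /y inordK.
have hwx : exists2 j, (j < n)%N & x j < L j - K j by exists (nat_of_ord j0) => //; rewrite -hXx.
have hwy : exists2 j, (j < n)%N & y j < L j - K j by exists (nat_of_ord j1) => //; rewrite -hYy.
have [dge _] := diff_ge hk (leqnn n).
rewrite /Lp -/tau -/kappa in dge.
have m_eq : m%:Z = tau - kappa by rewrite /m gez0_abs //; lia.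
have m_gt1 : (1 < m)%N.
  have : 2 <= m%:Z by rewrite m_eq; lia.
  lia.
have hcop : forall j, (0 < j < n)%N -> coprimez (Lp L n - Ks K n 0) (K j).
  move=> j hj; have u := hunit j hj.
  have /andP[k0 _] := hk j (proj2 (andP hj)).
  have Kj : K j = (`|K j|%N)%:Z by rewrite gez0_abs // ltW.
  rewrite Kj -pmulrn unitZpE // in u.
have hb : forall j, (j < n)%N ->
    ((\prod_(1 <= i < j.+1) K i)%:~R : 'Z_m) *
      betaseq (fun j => ((L j)%:~R : 'Z_m)) (fun j => ((K j)%:~R : 'Z_m)) j
    = (Lp L j)%:~R.
  elim=> [|j IH] hj.
    by rewrite big_geq //= /Lp big_geq // mulr1.
  have e1 : \prod_(1 <= i < j.+2) K i = \prod_(1 <= i < j.+1) K i * K j.+1 by rewrite big_nat_recr.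
  have e2 : Lp L j.+1 = Lp L j * L j by rewrite /Lp big_nat_recr.
  rewrite e1 e2 /= [X in X * _]intrM [RHS]intrM -IH; last exact: ltnW.
  have uk : ((K j.+1)%:~R : 'Z_m) \is a GRing.unit by apply: hunit; rewrite hj.
  rewrite !mulrA -(mulrA _ ((K j.+1)%:~R)) (mulrV uk) mulr1.
  by rewrite mulrAC.
pose P := ((\prod_(1 <= i < n) K i)%:~R : 'Z_m).
have hPA : forall i : 'I_n, P * beta i = (Lp L i * Ks K n i.+1)%:~R.
  move=> i; rewrite /P (@big_cat_nat _ _ _ i.+1) //= intrM mulrAC.
  by rewrite /beta hb // intrM.
have hsum : ((\sum_(0 <= j < n) (x j - y j) * (Lp L j * Ks K n j.+1))%:~R : 'Z_m) = 0.
  have : P * (dotg X beta - dotg Y beta) = 0 by rewrite heq subrr mulr0.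
  rewrite /dotg -sumrB mulr_sumr big_mkord rmorph_sum => h; rewrite -[RHS]h.
  apply: eq_bigr => i _.
  by rewrite -mulrzBr mulrzAr hPA -[RHS]mulrzl -[RHS]intrM hXx hYy.
have := Zp_int0 m_gt1 hsum; rewrite m_eq => /dvdzP [t ht].
have [e [e0 hd]] := chairL2 hk hcop ht.
have hle := chairL1 hk hx hy hwx e0 hd.
have hge := chairL1 (e := fun j => - e j) hk hy hx hwy (ltac:(by rewrite /= e0))
  (ltac:(by move=> j hj /=; have := hd j hj; lia)).
apply/ffunP => i; rewrite hXx hYy.
have := hd i (ltn_ord i).
have := hle i (ltnW (ltn_ord i)); have := hle i.+1 (ltn_ord i).
have := hge i (ltnW (ltn_ord i)); have := hge i.+1 (ltn_ord i).
move=> /= a1 a2 a3 a4 h.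
have z1 : e i = 0 by lia.
have z2 : e i.+1 = 0 by lia.
rewrite z1 z2 !mul0r subr0 in h.
lia.
Qed.
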